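(* Consider any JPLT-I protocol. For every realization $\mathrm{Q}$ of the query $Q$ occurring with positive probability and every $\tilde W\in\mathbb{W}$, there exists $\tilde V\in\mathbb{V}_I$ such that $H\big(Z^{[\tilde W,\tilde V]}\mid A,\,Q=\mathrm{Q}\big)=0$, i.e., conditioned on $Q=\mathrm{Q}$, the matrix $Z^{[\tilde W,\tilde V]}=\tilde V X_{\tilde W}$ is a deterministic function of the answer $A$.
   Context: Setup. Let $q$ be a prime power, $N\ge 1$ an integer, $B=N\log_2 q$, and $1\le L\le D\le K$ integers. Let $\mathbb{W}$ be the set of all $D$-element subsets of $[K]=\{1,\dots,K\}$. Let $\mathbb{V}_I$ be the set of $L\times D$ matrices over $\mathbb{F}_q$ that are MDS (every $L\times L$ submatrix is invertible), and $\mathbb{V}_{II}$ the set of $L\times D$ matrices over $\mathbb{F}_q$ of rank $L$. A server stores messages $X_1,\dots,X_K\in\mathbb{F}_q^N$ (row vectors), which are independent and uniformly distributed; $X$ denotes the $K\times N$ matrix with rows $X_1,\dots,X_K$, and for $S\subseteq[K]$, $X_S$ is the submatrix of rows indexed by $S$ (in increasing order). For $W\in\mathbb{W}$ and an $L\times D$ matrix $V$, the demand is $Z^{[W,V]}=VX_W=UX$, where the global coefficient matrix $U$ is the $L\times K$ matrix whose columns indexed by $W$ (in increasing order) are the columns of $V$ and whose other columns are zero. The demand support $W$ is uniform on $\mathbb{W}$; the coefficient matrix $V$ is uniform on $\mathbb{V}_I$ (Model I) or on $\mathbb{V}_{II}$ (Model II); $W,V,X$ are mutually independent. The server knows $K,D,L$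 and these distributions but not the realizations of $W,V$. Protocol. The user draws private randomness $R$ independent of $(W,V,X)$ and sends a query $Q=Q^{[W,V]}$ that is a function of $(W,V,R)$; the server returns an answer $A=A^{[W,V]}$ that is a deterministic function of $(Q,X)$. Recoverability: $H(Z^{[W,V]}\mid A,Q,W,V)=0$. Joint privacy: for every realization $\mathrm{Q}$ of the query with positive probability and every $\tilde W\in\mathbb{W}$, $\Pr(W=\tilde W\mid Q=\mathrm{Q})=1/\binom{K}{D}$. A JPLT-I (resp. JPLT-II) protocol is a protocol satisfying recoverability and joint privacy under Model I (resp. Model II). The rate of a protocol is $H(Z^{[W,V]})/H(A)=LB/H(A)$. *)

(* Defs.v *)
From HB Require Import structures.
From mathcomp Require Import all_boot all_order all_algebra all_field.
From mathcomp Require Import all_classical all_reals exp.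
Set Implicit Arguments. Unset Strict Implicit. Unset Printing Implicit Defensive.
Import Order.TTheory GRing.Theory Num.Theory.
Local Open Scope ring_scope.

Definition sorted_idx (n : nat) (S : {set 'I_n}) : seq nat :=
  sort leq [seq val k | k <- enum S].

(** Columns of A indexed by S, in increasing order (r = intended #|S|). *)
Definition colsub_set (R : nmodType) (m n r : nat) (A : 'M[R]_(m, n))
    (S : {set 'I_n}) : 'M[R]_(m, r) :=
  \matrix_(i < m, j < r) \sum_(k < n | val k == nth 0%N (sorted_idx S) j) A i k.

Definition rowsub_set (R : nmodType) (m n r : nat) (X : 'M[R]_(m, n))
    (S : {set 'I_m}) : 'M[R]_(r, n) :=
  \matrix_(j < r, c < n) \sum_(k < m | val k == nth 0%N (sorted_idx S) j) X k c.

Definition is_MDS (F : fieldType) (L D : nat) (V : 'M[F]_(L, D)) : bool :=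
  [forall S : {set 'I_D}, (#|S| == L) ==> (colsub_set L V S \in unitmx)].

Definition demand (F : fieldType) (K N L D : nat) (W : {set 'I_K})
    (V : 'M[F]_(L, D)) (X : 'M[F]_(K, N)) : 'M[F]_(L, N) :=
  V *m rowsub_set D X W.

Definition prob (R : realType) (Om : finType) (p : Om -> R) (E : Om -> bool) : R :=
  \sum_(w : Om) p w * (E w)%:R.

Definition condp (R : realType) (Om : finType) (p : Om -> R) (E : Om -> bool)
    : Om -> R := fun w => p w * (E w)%:R / prob p E.

(** Conditional entropy H(Z | Y) in bits:
    sum_{z,y} p(z,y) log2 (p(y) / p(z,y)), written as an expectation over Om. *)
Definition cond_entropy (R : realType) (Om : finType) (p : Om -> R)
    (TZ TY : eqType) (Z : Om -> TZ) (Y : Om -> TY) : R :=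
  \sum_(w : Om) p w *
     (ln (prob p (fun w' => Y w' == Y w) /
          prob p (fun w' => (Z w' == Z w) && (Y w' == Y w))) / ln 2).

Definition Omega (F : finFieldType) (K N L D : nat) (RT : finType) : finType :=
  ({set 'I_K} * 'M[F]_(L, D) * RT * 'M[F]_(K, N))%type.

Definition Wset (K D : nat) : {set {set 'I_K}} := [set S : {set 'I_K} | #|S| == D].

Definition VIset (F : finFieldType) (L D : nat) : {set 'M[F]_(L, D)} :=
  [set V : 'M[F]_(L, D) | is_MDS V].

(** Joint law of (W, V, R, X) in Model I: W uniform on Wset, V uniform on VIset,
    R with law pR, X uniform on F^{K x N}; mutually independent. *)
Definition jointI (R : realType) (F : finFieldType) (K N L D : nat) (RT : finType)
    (pR : RT -> R) (w : Omega F K N L D RT) : R :=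
  let: (W, V, r, X) := w in
  ((W \in Wset K D)%:R / #|Wset K D|%:R) *
  ((V \in VIset F L D)%:R / #|VIset F L D|%:R) *
  pR r * (1 / #|{: 'M[F]_(K, N)}|%:R).

Definition JPLT_I (R : realType) (F : finFieldType) (K N L D : nat) (RT : finType)
    (pR : RT -> R) (QT AT : eqType)
    (Qry : {set 'I_K} -> 'M[F]_(L, D) -> RT -> QT)
    (Ans : QT -> 'M[F]_(K, N) -> AT) : Prop :=
  let p := jointI pR in
  let Qv := fun w : Omega F K N L D RT => let: (W, V, r, X) := w in Qry W V r in
  let Av := fun w : Omega F K N L D RT => let: (_, _, _, X) := w in Ans (Qv w) X in
  let Wv := fun w : Omega F K N L D RT => let: (W, _, _, _) := w in W in
  let Vv := fun w : Omega F K N L D RT => let: (_, V, _, _) := w in V in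
  let Zv := fun w : Omega F K N L D RT => let: (W, V, _, X) := w in demand W V X in
  cond_entropy p Zv (fun w => (Av w, Qv w, Wv w, Vv w)) = 0 /\
  (forall Q0 : QT, prob p (fun w => Qv w == Q0) > 0 ->
     forall Wt : {set 'I_K}, #|Wt| = D ->
       prob (condp p (fun w => Qv w == Q0)) (fun w => Wv w == Wt)
       = 1 / ('C(K, D))%:R).

(* Main.v *)
Require Import Defs.
From HB Require Import structures.
From mathcomp Require Import all_boot all_order all_algebra all_field.
From mathcomp Require Import all_classical all_reals exp.
Import Order.TTheory GRing.Theory Num.Theory.
Local Open Scope ring_scope.

Section Gen.
Variables (R : realType) (Om : finType) (p : Om -> R).
Hypothesis p0 : forall w, 0 <= p w.

Lemma prob_ge0 E : 0 <= prob p E.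
Proof. by apply: sumr_ge0 => w _; rewrite mulr_ge0. Qed.

Lemma prob_mono (E1 E2 : Om -> bool) : (forall w, E1 w -> E2 w) -> prob p E1 <= prob p E2.
Proof.
move=> H; apply: ler_sum => w _; apply: ler_wpM2l => //.
by case E: (E1 w); rewrite ?(H _ E) // ler_nat; case: (E2 w).
Qed.

Lemma prob_pt (E : Om -> bool) v : E v -> p v <= prob p E.
Proof.
move=> Ev; rewrite /prob (bigD1 v) //= Ev mulr1 lerDl.
by apply: sumr_ge0 => w _; rewrite mulr_ge0.
Qed.

Variables (TZ TY : eqType) (Z : Om -> TZ) (Y : Om -> TY).

Lemma ce_inv : cond_entropy p Z Y = 0 ->
  forall w w', 0 < p w -> 0 < p w' -> Y w = Y w' -> Z w = Z w'.
Proof.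
move=> H w w' pw pw' Yw.
have key v : 0 < p v -> 0 < prob p (fun w' => (Z w' == Z v) && (Y w' == Y v)) /\
   prob p (fun w' => (Z w' == Z v) && (Y w' == Y v)) <= prob p (fun w' => Y w' == Y v).
  move=> pv; split; first by apply: (lt_le_trans pv); apply: prob_pt; rewrite !eqxx.
  by apply: prob_mono => u /andP[].
have ln2 : 0 < ln (2:R) by rewrite ln_gt0 // ltr1n.
have tge v : 0 <= p v * (ln (prob p (fun w' => Y w' == Y v) /
          prob p (fun w' => (Z w' == Z v) && (Y w' == Y v))) / ln 2).
  have [pv|] := ltP 0 (p v); last first.
    move=> pv; have -> : p v = 0 by (apply/eqP; rewrite eq_le pv p0).
by rewrite mul0r.
  have [b0 ba] := key v pv.
  apply: mulr_ge0; first exact: ltW.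
  apply: divr_ge0; last exact: ltW.
  by apply: ln_ge0; rewrite ler_pdivlMr // mul1r.
have := psumr_eq0P (fun v _ => tge v) H (i:=w) isT.
move/eqP; rewrite mulf_eq0 (gt_eqF pw) /= mulf_eq0 invr_eq0 (gt_eqF ln2) orbF.
have [b0 ba] := key w pw.
have a0 : 0 < prob p (fun w' => Y w' == Y w) by apply: lt_le_trans ba.
move=> /eqP l0.
have : ln (prob p (fun w' => Y w' == Y w) /
          prob p (fun w' => (Z w' == Z w) && (Y w' == Y w))) = ln 1 by rewrite ln1.
move/ln_inj; rewrite !posrE divr_gt0 // ltr01 => /(_ isT isT) /eqP.
move=> /eqP E0.
have E : prob p (fun w' => Y w' == Y w) = prob p (fun w' => (Z w' == Z w) && (Y w' == Y w)).
  by rewrite -(divfK (lt0r_neq0 b0) (prob p (fun w' => Y w' == Y w))) E0 mul1r.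
have : prob p (fun w' => Y w' == Y w) - prob p (fun w' => (Z w' == Z w) && (Y w' == Y w)) = 0
  by rewrite E subrr.
rewrite /prob -sumrB => S.
have tg u : true -> 0 <= p u * (Y u == Y w)%:R - p u * ((Z u == Z w) && (Y u == Y w))%:R.
  move=> _; rewrite subr_ge0; apply: ler_wpM2l => //.
  by case: (Z u == Z w); case: (Y u == Y w).
have := psumr_eq0P tg S (i:=w') isT.
rewrite Yw eqxx andbT; case: eqP => // _ /eqP.
by rewrite mulr1 mulr0 subr0 (gt_eqF pw').
Qed.

Lemma ce_zero : (forall w w', 0 < p w -> 0 < p w' -> Y w = Y w' -> Z w = Z w') ->
  cond_entropy p Z Y = 0.
Proof.
move=> H; apply: big1 => w _.
have [pw|pw] := ltP 0 (p w); last first.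
  have -> : p w = 0 by apply/eqP; rewrite eq_le pw p0.
  by rewrite mul0r.
suff -> : prob p (fun w' => Y w' == Y w) = prob p (fun w' => (Z w' == Z w) && (Y w' == Y w)).
  have b0 : 0 < prob p (fun w' => (Z w' == Z w) && (Y w' == Y w)).
    by apply: (lt_le_trans pw); apply: prob_pt; rewrite !eqxx.
  by rewrite divff ?(lt0r_neq0 b0) // ln1 mul0r mulr0.
apply: eq_bigr => u _.
have [pu|pu] := ltP 0 (p u); last first.
  have -> : p u = 0 by apply/eqP; rewrite eq_le pu p0.
  by rewrite !mul0r.
case: eqP => Yu; last by rewrite andbF.
by rewrite (H u w) ?eqxx.
Qed.
End Gen.

Section J.
Variables (R : realType) (F : finFieldType) (K N L D : nat) (RT : finType) (pR : RT -> R).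
Hypothesis pR0 : forall r, 0 <= pR r.

Lemma jointI_ge0 (w : Omega F K N L D RT) : 0 <= jointI pR w.
Proof.
case: w => [[[W V] r] X] /=.
apply: (@mulr_ge0 R); [apply: (@mulr_ge0 R); [apply: (@mulr_ge0 R)|exact: pR0]|]. all: try apply: (@divr_ge0 R). all: by rewrite ?ler0n ?ler01.
Qed.

Lemma jointI_neq0 (W : {set 'I_K}) (V : 'M[F]_(L, D)) r (X : 'M[F]_(K, N)) : jointI pR (W, V, r, X) != 0 ->
  [/\ W \in Wset K D, V \in VIset F L D & pR r != 0].
Proof.
rewrite /=; case hW: (W \in Wset K D); last by rewrite !mul0r eqxx.
case hV: (V \in VIset F L D); last by rewrite mul0r mulr0 !mul0r eqxx.
move=> H; split => //; apply: contraNneq H => ->; by rewrite mulr0 mul0r.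
Qed.

Lemma jointI_gt0 (W : {set 'I_K}) (V : 'M[F]_(L, D)) r (X : 'M[F]_(K, N)) : W \in Wset K D -> V \in VIset F L D -> 0 < pR r ->
  0 < jointI pR (W, V, r, X).
Proof.
move=> hW hV hr /=; rewrite hW hV !mul1r.
have cW : (0 < #|Wset K D|)%N by apply/card_gt0P; exists W.
have cV : (0 < #|VIset F L D|)%N by apply/card_gt0P; exists V.
have cM : (0 < #|{: 'M[F]_(K, N)}|)%N by apply/card_gt0P; exists 0.
by rewrite !mulr_gt0 // invr_gt0 ltr0n.
Qed.
End J.

Theorem lemma1 (R : realType) (F : finFieldType) (K N L D : nat)
    (RT : finType) (pR : RT -> R) (QT AT : eqType)
    (Qry : {set 'I_K} -> 'M[F]_(L, D) -> RT -> QT)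
    (Ans : QT -> 'M[F]_(K, N) -> AT) :
  (1 <= N)%N -> (1 <= L)%N -> (L <= D)%N -> (D <= K)%N ->
  (forall r, 0 <= pR r) -> \sum_(r : RT) pR r = 1 ->
  JPLT_I pR Qry Ans ->
  let p := jointI pR in
  let Qv := fun w : Omega F K N L D RT => let: (W, V, r, X) := w in Qry W V r in
  let Av := fun w : Omega F K N L D RT => let: (_, _, _, X) := w in Ans (Qv w) X in
  forall Q0 : QT, prob p (fun w => Qv w == Q0) > 0 ->
  forall Wt : {set 'I_K}, #|Wt| = D ->
  exists Vt : 'M[F]_(L, D), is_MDS Vt /\
    cond_entropy (condp p (fun w => Qv w == Q0))
      (fun w : Omega F K N L D RT => let: (_, _, _, X) := w in demand Wt Vt X)
      Av = 0.
Proof.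
move=> hN hL hLD hDK pR0 pR1 hJ p Qv Av Q0 hQ Wt hWt.
case: hJ => rec priv.
have hpr := priv Q0 hQ Wt hWt.
have p0 : forall w, 0 <= p w by move=> w; apply: jointI_ge0.
have c0 : forall w, 0 <= condp p (fun w => Qv w == Q0) w.
  move=> w; rewrite /condp; apply: divr_ge0; last exact: ltW.
  by apply: mulr_ge0 => //; rewrite ler0n.
have Cpos : 0 < 1 / ('C(K, D))%:R :> R.
  by rewrite div1r invr_gt0 ltr0n bin_gt0.
move: hpr; rewrite /prob.
case: (boolP [exists w : Omega F K N L D RT, condp p (fun w => Qv w == Q0) w *
   ((let: (W, _, _, _) := w in W) == Wt)%:R != 0]); last first.
  move/existsPn => H; rewrite big1 => [E|w _]; first by move: Cpos; rewrite -E ltxx.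
  by apply/eqP; rewrite -[_ == _]negbK H.
move=> /existsP [[[[W V] r] X]] /=.
rewrite mulf_eq0 negb_or => /andP [hc hWW].
have eW : W = Wt by apply/eqP; move: hWW; case: (W == Wt) => //; rewrite eqxx.
subst W.
move: hc; rewrite /condp mulf_eq0 negb_or => /andP [hpb _].
move: hpb; rewrite mulf_eq0 negb_or => /andP [hp hE].
have hq : Qry Wt V r = Q0.
  apply/eqP; apply: contraNT hE => /negbTE h; by rewrite /Qv /= h mulr0n eqxx.
have [hW hV hr] := @jointI_neq0 R F K N L D RT pR Wt V r X hp.
exists V; split; first by move: hV; rewrite inE.
apply: ce_zero => // -[[[W1 V1] r1] X1] [[[W2 V2] r2] X2] h1 h2 hA.
have hq1 : Qry W1 V1 r1 = Q0.
  apply/eqP; apply: contraTT h1 => /negbTE h.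
  by rewrite /Qv /= h mulr0n mulr0 mul0r ltxx.
have hq2 : Qry W2 V2 r2 = Q0.
  apply/eqP; apply: contraTT h2 => /negbTE h.
  by rewrite /Qv /= h mulr0n mulr0 mul0r ltxx.
move: hA; rewrite /Av /Qv /= hq1 hq2 => hA.
have rpos : 0 < pR r by rewrite lt_neqAle eq_sym hr pR0.
have := @ce_inv R _ (jointI pR) (@jointI_ge0 R F K N L D RT pR pR0) _ _ _ _ rec
  (Wt, V, r, X1) (Wt, V, r, X2).
apply.
- exact: jointI_gt0.
- exact: jointI_gt0.
- by rewrite /= hq hA.
Qed.
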